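(* Let $\{|0\rangle,|1\rangle,|2\rangle\}$ be the standard basis of $\mathbb C^3$ and consider the seven product states in $\mathbb C^3\otimes\mathbb C^3$: $|\psi_1\rangle=|0\rangle\otimes|0\rangle$, $|\psi_2\rangle=(|1\rangle+|2\rangle)\otimes|0\rangle$, $|\psi_3\rangle=(|1\rangle-|2\rangle)\otimes|0\rangle$, $|\psi_4\rangle=|0\rangle\otimes(|1\rangle+|2\rangle)$, $|\psi_5\rangle=|0\rangle\otimes(|1\rangle-|2\rangle)$, $|\psi_6\rangle=|1\rangle\otimes|1\rangle$, $|\psi_7\rangle=|2\rangle\otimes|2\rangle$. These states are perfectly distinguishable by one-way LOCC with Alice measuring first and by one-way LOCC with Bob measuring first, but they are not perfectly distinguishable by a product measurement.
   Context: One-way LOCC with Alice first: there exist positive semidefinite $Q_1,\dots,Q_N$ on $\mathcal H_A$ with $\sum_jQ_j=I$ and, for each $j$, positive semidefinite $R^{(j)}_1,\dots,R^{(j)}_r$ on $\mathcal H_B$ with $\sum_kR^{(j)}_k=I$, such that $\langle\psi_l|Q_j\otimes R^{(j)}_k|\psi_l\rangle=0$ for all $j$ and $k\ne l$; with Bob first, the same with the roles of the two factors exchanged. Perfect distinguishability by a product measurement: there exist positive semidefinite $A_1,\dots,A_p$ on $\mathcal H_A$ summing to $I$ and $B_1,\dots,B_q$ on $\mathcal H_B$ summing to $I$ such that for every pair $(a,b)$ at most one index $k$ satisfies $\langle\psi_k|A_a\otimes B_b|\psi_k\rangle\ne0$. Here $\mathcal H_A=\mathcal H_B=\mathbb C^3$,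 the first tensor factor being Alice's. *)

(* Defs.v *)
From HB Require Import structures.
From mathcomp Require Import all_boot all_order all_algebra all_field.
Set Implicit Arguments. Unset Strict Implicit. Unset Printing Implicit Defensive.
Import Order.TTheory GRing.Theory Num.Theory.
Local Open Scope ring_scope.

Definition dag (m n : nat) (A : 'M[algC]_(m, n)) : 'M[algC]_(n, m) :=
  (map_mx (fun z => z^*) A)^T.

Definition psd (n : nat) (A : 'M[algC]_n) : Prop :=
  dag A = A /\ forall v : 'cV[algC]_n, 0 <= (dag v *m A *m v) 0 0.

(* Kronecker (tensor) product on C^3 (x) C^3 = C^(3*3); the index 3*a+b
   corresponds to |a> (x) |b>, the first factor being Alice's. *)
Definition kron3 (A B : 'M[algC]_3) : 'M[algC]_(3 * 3) :=
  \matrix_(i, j) (A (inord (i %/ 3)) (inord (j %/ 3)) *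
                  B (inord (i %% 3)) (inord (j %% 3))).

Definition kronv3 (u v : 'cV[algC]_3) : 'cV[algC]_(3 * 3) :=
  \col_i (u (inord (i %/ 3)) 0 * v (inord (i %% 3)) 0).

Definition expect (n : nat) (psi : 'cV[algC]_n) (M : 'M[algC]_n) : algC :=
  (dag psi *m M *m psi) 0 0.

Definition ket (k : 'I_3) : 'cV[algC]_3 := delta_mx k 0.

(* the seven states psi_1, ..., psi_7 (indexed 0..6) *)
Definition psi (l : 'I_7) : 'cV[algC]_(3 * 3) :=
  match val l with
  | 0 => kronv3 (ket 0) (ket 0)
  | 1 => kronv3 (ket 1 + ket 2) (ket 0)
  | 2 => kronv3 (ket 1 - ket 2) (ket 0)
  | 3 => kronv3 (ket 0) (ket 1 + ket 2)
  | 4 => kronv3 (ket 0) (ket 1 - ket 2)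
  | 5 => kronv3 (ket 1) (ket 1)
  | _ => kronv3 (ket 2) (ket 2)
  end.

Definition oneway_LOCC_Alice_first (r : nat) (s : 'I_r -> 'cV[algC]_(3 * 3)) : Prop :=
  exists (N : nat) (Q : 'I_N -> 'M[algC]_3) (R : 'I_N -> 'I_r -> 'M[algC]_3),
    (forall j, psd (Q j)) /\ \sum_(j < N) Q j = 1%:M /\
    (forall j k, psd (R j k)) /\ (forall j, \sum_(k < r) R j k = 1%:M) /\
    (forall j k l, k != l -> expect (s l) (kron3 (Q j) (R j k)) = 0).

Definition oneway_LOCC_Bob_first (r : nat) (s : 'I_r -> 'cV[algC]_(3 * 3)) : Prop :=
  exists (N : nat) (Q : 'I_N -> 'M[algC]_3) (R : 'I_N -> 'I_r -> 'M[algC]_3),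
    (forall j, psd (Q j)) /\ \sum_(j < N) Q j = 1%:M /\
    (forall j k, psd (R j k)) /\ (forall j, \sum_(k < r) R j k = 1%:M) /\
    (forall j k l, k != l -> expect (s l) (kron3 (R j k) (Q j)) = 0).

Definition product_distinguishable (r : nat) (s : 'I_r -> 'cV[algC]_(3 * 3)) : Prop :=
  exists (p q : nat) (A : 'I_p -> 'M[algC]_3) (B : 'I_q -> 'M[algC]_3),
    (forall a, psd (A a)) /\ \sum_(a < p) A a = 1%:M /\
    (forall b, psd (B b)) /\ \sum_(b < q) B b = 1%:M /\
    (forall a b k k', expect (s k) (kron3 (A a) (B b)) != 0 ->
                      expect (s k') (kron3 (A a) (B b)) != 0 -> k = k').

(* Main.v *)
Require Import Defs.
From HB Require Import structures.
From mathcomp Require Import all_boot all_order all_algebra all_field.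
From mathcomp Require Import mxtens ring.
Import Order.TTheory GRing.Theory Num.Theory.
Set Implicit Arguments. Unset Strict Implicit. Unset Printing Implicit Defensive.
Local Open Scope ring_scope.

Lemma dagD m n (u v : 'M[algC]_(m, n)) : dag (u + v) = dag u + dag v.
Proof. by apply/matrixP => i j; rewrite !mxE rmorphD. Qed.
Lemma dagB m n (u v : 'M[algC]_(m, n)) : dag (u - v) = dag u - dag v.
Proof. by apply/matrixP => i j; rewrite !mxE rmorphB. Qed.
Lemma dagZ m n s (u : 'M[algC]_(m, n)) : dag (s *: u) = s^* *: dag u.
Proof. by apply/matrixP => i j; rewrite !mxE rmorphM. Qed.
Lemma dagK m n (u : 'M[algC]_(m, n)) : dag (dag u) = u.
Proof. by apply/matrixP => i j; rewrite !mxE conjCK. Qed.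
Lemma dagM m n p (X : 'M[algC]_(m, n)) (Y : 'M[algC]_(n, p)) :
  dag (X *m Y) = dag Y *m dag X.
Proof.
apply/matrixP => i j; rewrite !mxE rmorph_sum; apply: eq_bigr => k _.
by rewrite !mxE rmorphM mulrC.
Qed.
Lemma dag0 m n : dag (0 : 'M[algC]_(m, n)) = 0.
Proof. by apply/matrixP => i j; rewrite !mxE conjC0. Qed.

Definition bil n (A : 'M[algC]_n) (v w : 'cV[algC]_n) := (dag v *m A *m w) 0 0.

Lemma bil_expand n (A : 'M[algC]_n) v w s :
  bil A (v + s *: w) (v + s *: w) =
  bil A v v + s * bil A v w + s^* * bil A w v + s^* * s * bil A w w.
Proof.
rewrite /bil dagD dagZ !mulmxDl !mulmxDr -!scalemxAl -!scalemxAr !mxE.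
ring.
Qed.

Lemma bil_herm n (A : 'M[algC]_n) v w : dag A = A -> bil A w v = (bil A v w)^*.
Proof.
move=> hA; rewrite /bil.
have -> : ((dag v *m A *m w) 0 0)^* = (dag (dag v *m A *m w)) 0 0 by rewrite !mxE.
by rewrite !dagM dagK hA mulmxA.
Qed.

Lemma psd_null n (A : 'M[algC]_n) v w :
  psd A -> bil A w w = 0 -> bil A v w = 0.
Proof.
move=> [hA hpos] hw; apply/eqP; apply/negP => /negP hc.
have he : 0 <= bil A v v := hpos v.
set c := bil A v w in hc *; set e := bil A v v in he *.
pose s := - (e + 1) / c.
have sc : s * c = - (e + 1) by rewrite /s divfK.
have := hpos (v + s *: w).
rewrite -/(bil A _ _) bil_expand hw mulr0 addr0 (bil_herm v w hA) -/c -/e.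
have hre : (- (e + 1))^* = - (e + 1).
  by apply: conj_Creal; rewrite rpredN rpredD ?real1 ?ger0_real.
have hsc : s^* * c^* = - (e + 1) by rewrite -rmorphM sc; exact: hre.
rewrite hsc sc => h.
have h2 : 0 < e + 2 by apply: ltr_wpDl => //; rewrite ltr0n.
have h3 : e + - (e + 1) + - (e + 1) = - (e + 2) by ring.
rewrite h3 oppr_ge0 in h.
by have := lt_le_trans h2 h; rewrite ltxx.
Qed.


Lemma expectE n (w : 'cV[algC]_n) M :
  expect w M = \sum_i \sum_j (w i 0)^* * M i j * w j 0.
Proof.
rewrite /expect mxE (exchange_big) /=; apply: eq_bigr => j _.
rewrite !mxE mulr_suml; apply: eq_bigr => i _; by rewrite !mxE.
Qed.

Lemma unindex1 (k : 'I_(3 * 3)) : inord (k %/ 3) = (mxtens_unindex k).1.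
Proof. by apply: val_inj; rewrite /= inordK // mxtens_index_proof1. Qed.
Lemma unindex2 (k : 'I_(3 * 3)) : inord (k %% 3) = (mxtens_unindex k).2.
Proof. by apply: val_inj; rewrite /= inordK // mxtens_index_proof2. Qed.

Lemma expect_kron u v A B :
  expect (kronv3 u v) (kron3 A B) = expect u A * expect v B.
Proof.
rewrite !expectE mulr_sum; apply: eq_bigr => k _.
rewrite mulr_sum; apply: eq_bigr => l _.
rewrite !mxE !unindex1 !unindex2 rmorphM; ring.
Qed.

Definition ip (u v : 'cV[algC]_3) := (dag u *m v) 0 0.
Definition proj (v : 'cV[algC]_3) := v *m dag v.
Definition hproj (v : 'cV[algC]_3) := 2^-1 *: proj v.

Lemma ipDl u1 u2 v : ip (u1 + u2) v = ip u1 v + ip u2 v.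
Proof. by rewrite /ip dagD mulmxDl mxE. Qed.
Lemma ipDr u v1 v2 : ip u (v1 + v2) = ip u v1 + ip u v2.
Proof. by rewrite /ip mulmxDr mxE. Qed.
Lemma ipBl u1 u2 v : ip (u1 - u2) v = ip u1 v - ip u2 v.
Proof. by rewrite /ip dagB mulmxBl !mxE. Qed.
Lemma ipBr u v1 v2 : ip u (v1 - v2) = ip u v1 - ip u v2.
Proof. by rewrite /ip mulmxBr !mxE. Qed.
Lemma dag_ket i : dag (ket i) = delta_mx 0 i.
Proof.
apply/matrixP => a b; rewrite !mxE.
by case: (_ == _); case: (_ == _); rewrite /= ?conjC1 ?conjC0.
Qed.
Lemma ip_ket i j : ip (ket i) (ket j) = (i == j)%:R.
Proof.
rewrite /ip dag_ket /ket mul_delta_mx_cond.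
by case: (i == j); rewrite ?mulr1n ?mulr0n !mxE.
Qed.
Lemma ip_conj u v : ip v u = (ip u v)^*.
Proof.
rewrite /ip.
have -> : ((dag u *m v) 0 0)^* = (dag (dag u *m v)) 0 0 by rewrite !mxE.
by rewrite dagM dagK.
Qed.

Lemma expect_proj u v : expect u (proj v) = ip u v * ip v u.
Proof.
rewrite /expect /proj.
have -> : dag u *m (v *m dag v) *m u = (dag u *m v) *m (dag v *m u) by rewrite !mulmxA.
by rewrite mxE big_ord1.
Qed.
Lemma expectZ n (u : 'cV[algC]_n) c M : expect u (c *: M) = c * expect u M.
Proof. by rewrite /expect -scalemxAr -scalemxAl mxE. Qed.
Lemma expect_hproj u v : expect u (hproj v) = 2^-1 * (ip u v * ip v u).
Proof. by rewrite /hproj expectZ expect_proj. Qed.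
Lemma expect0 n (u : 'cV[algC]_n) : expect u 0 = 0.
Proof. by rewrite /expect mulmx0 mul0mx mxE. Qed.

Lemma psd_proj v : psd (proj v).
Proof.
split; first by rewrite /proj dagM dagK.
move=> w; rewrite -/(expect w _) expect_proj (ip_conj w v).
exact: mul_conjC_ge0.
Qed.
Lemma psd_hproj v : psd (hproj v).
Proof.
have h2 : 0 <= (2^-1 : algC) by rewrite invr_ge0 ler0n.
split; first by rewrite /hproj dagZ (geC0_conj h2) (proj1 (psd_proj v)).
move=> w; rewrite -/(expect w _) /hproj expectZ mulr_ge0 //.
exact: (proj2 (psd_proj v)).
Qed.
Lemma psd0 : psd (0 : 'M[algC]_3).
Proof. split; first exact: dag0. by move=> w; rewrite mulmx0 mul0mx mxE. Qed.

Lemma proj_ket i : proj (ket i) = delta_mx i i.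
Proof. by rewrite /proj dag_ket /ket mul_delta_mx. Qed.

Lemma proj_sum3 : proj (ket 0) + proj (ket 1) + proj (ket 2) = 1%:M.
Proof.
rewrite !proj_ket; apply/matrixP => i j; rewrite !mxE.
case: i => [[|[|[|i]]] hi]; case: j => [[|[|[|j]]] hj]; rewrite /= ?addr0 ?add0r //.
all: try by move: hi. all: by move: hj.
Qed.

Lemma hproj_pm u v : hproj (u + v) + hproj (u - v) = proj u + proj v.
Proof.
rewrite /hproj /proj dagD dagB !(mulmxDl, mulmxDr, mulNmx, mulmxN).
apply/matrixP => i j; rewrite !mxE.
by field.
Qed.

Lemma proj_sumpm : proj (ket 0) + hproj (ket 1 + ket 2) + hproj (ket 1 - ket 2) = 1%:M.
Proof. by rewrite -addrA hproj_pm addrA proj_sum3. Qed.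

Definition QA (j : nat) : 'M[algC]_3 :=
  match j with 0 => proj (ket 0) | 1 => hproj (ket 1 + ket 2) | _ => hproj (ket 1 - ket 2) end.
Definition RA (j k : nat) : 'M[algC]_3 :=
  match j, k with
  | 0, 0 => proj (ket 0) | 0, 3 => hproj (ket 1 + ket 2) | 0, 4 => hproj (ket 1 - ket 2)
  | 1, 1 => proj (ket 0) | 1, 5 => proj (ket 1) | 1, 6 => proj (ket 2)
  | 2, 2 => proj (ket 0) | 2, 5 => proj (ket 1) | 2, 6 => proj (ket 2)
  | _, _ => 0 end.
Definition RB (j k : nat) : 'M[algC]_3 :=
  match j, k with
  | 0, 0 => proj (ket 0) | 0, 1 => hproj (ket 1 + ket 2) | 0, 2 => hproj (ket 1 - ket 2)
  | 1, 3 => proj (ket 0) | 1, 5 => proj (ket 1) | 1, 6 => proj (ket 2)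
  | 2, 4 => proj (ket 0) | 2, 5 => proj (ket 1) | 2, 6 => proj (ket 2)
  | _, _ => 0 end.

Lemma psd_QA j : psd (QA j).
Proof. case: j => [|[|j]] /=; [exact: psd_proj | exact: psd_hproj | exact: psd_hproj]. Qed.

Ltac psdtac := first [exact: psd_proj | exact: psd_hproj | exact: psd0].

Lemma psd_RA j k : psd (RA j k).
Proof.
by case: j => [|[|[|j]]]; case: k => [|[|[|[|[|[|[|k]]]]]]]; rewrite /=; psdtac.
Qed.
Lemma psd_RB j k : psd (RB j k).
Proof.
by case: j => [|[|[|j]]]; case: k => [|[|[|[|[|[|[|k]]]]]]]; rewrite /=; psdtac.
Qed.

Lemma sumQ : \sum_(j < 3) QA j = 1%:M.
Proof. by rewrite !big_ord_recr big_ord0 /= add0r proj_sumpm. Qed.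

Lemma sumRA (j : 'I_3) : \sum_(k < 7) RA j k = 1%:M.
Proof.
case: j => [[|[|[|j]]] // hj]; rewrite !big_ord_recr big_ord0 /= ?add0r ?addr0.
- exact: proj_sumpm.
- exact: proj_sum3.
- exact: proj_sum3.
Qed.
Lemma sumRB (j : 'I_3) : \sum_(k < 7) RB j k = 1%:M.
Proof.
case: j => [[|[|[|j]]] // hj]; rewrite !big_ord_recr big_ord0 /= ?add0r ?addr0.
- exact: proj_sumpm.
- exact: proj_sum3.
- exact: proj_sum3.
Qed.

Lemma ipNl u v : ip (- u) v = - ip u v.
Proof. by rewrite -[- u]add0r ipBl /ip dag0 mul0mx mxE add0r. Qed.
Lemma ipNr u v : ip u (- v) = - ip u v.
Proof. by rewrite -[- v]add0r ipBr /ip mulmx0 mxE add0r. Qed.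

Ltac comptac :=
  rewrite /psi /= expect_kron ?expect0 ?mulr0 ?mul0r //;
  rewrite ?(expect_proj, expect_hproj);
  rewrite ?(ipBl, ipBr, ipDl, ipDr, ipNl, ipNr, ip_ket) /=; ring.

Lemma orthA (j : 'I_3) (k l : 'I_7) : k != l ->
  expect (psi l) (kron3 (QA j) (RA j k)) = 0.
Proof.
case: j => [[|[|[|j]]] hj] //; case: k => [[|[|[|[|[|[|[|k]]]]]]] hk] //;
case: l => [[|[|[|[|[|[|[|l]]]]]]] hl] //= _; comptac.
Qed.

Lemma orthB (j : 'I_3) (k l : 'I_7) : k != l ->
  expect (psi l) (kron3 (RB j k) (QA j)) = 0.
Proof.
case: j => [[|[|[|j]]] hj] //; case: k => [[|[|[|[|[|[|[|k]]]]]]] hk] //;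
case: l => [[|[|[|[|[|[|[|l]]]]]]] hl] //= _; comptac.
Qed.

Lemma expect_sum n p (v : 'cV[algC]_n) (F : 'I_p -> 'M[algC]_n) :
  expect v (\sum_(a < p) F a) = \sum_(a < p) expect v (F a).
Proof. by rewrite /expect mulmx_sumr mulmx_suml summxE. Qed.

Lemma expect1 (v : 'cV[algC]_3) : expect v 1%:M = ip v v.
Proof. by rewrite /expect mulmx1. Qed.

Lemma sum_nz p (F : 'I_p -> algC) : \sum_(a < p) F a != 0 -> exists a, F a != 0.
Proof.
move=> H; case: (pickP (fun a => F a != 0)) => [a Ha|H0]; first by exists a.
move: H; rewrite big1 ?eqxx // => a _.
by move/negbFE: (H0 a) => /eqP.
Qed.

Lemma psd_pm (A : 'M[algC]_3) : psd A -> expect (ket 2) A = 0 ->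
  expect (ket 1 + ket 2) A = expect (ket 1) A /\
  expect (ket 1 - ket 2) A = expect (ket 1) A.
Proof.
move=> hA h2.
have h0 : bil A (ket 1) (ket 2) = 0 by apply: psd_null.
have h0' : bil A (ket 2) (ket 1) = 0 by rewrite (bil_herm _ _ (proj1 hA)) h0 conjC0.
have h2' : bil A (ket 2) (ket 2) = 0 by exact: h2.
split.
- have -> : expect (ket 1 + ket 2) A = bil A (ket 1 + 1 *: ket 2) (ket 1 + 1 *: ket 2)
    by rewrite scale1r.
  rewrite bil_expand h0 h0' h2' /expect -/(bil A _ _); ring.
- have -> : expect (ket 1 - ket 2) A = bil A (ket 1 + (-1) *: ket 2) (ket 1 + (-1) *: ket 2)
    by rewrite scaleN1r.
  rewrite bil_expand h0 h0' h2' /expect -/(bil A _ _); ring.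
Qed.

Theorem mainTheorem5 :
  oneway_LOCC_Alice_first psi /\ oneway_LOCC_Bob_first psi /\
  ~ product_distinguishable psi.
Proof.
split; [|split].
- exists 3, (fun j => QA j), (fun j k => RA j k).
  split; first by move=> j; exact: psd_QA.
  split; first exact: sumQ.
  split; first by move=> j k; exact: psd_RA.
  split; first exact: sumRA.
  exact: orthA.
- exists 3, (fun j => QA j), (fun j k => RB j k).
  split; first by move=> j; exact: psd_QA.
  split; first exact: sumQ.
  split; first by move=> j k; exact: psd_RB.
  split; first exact: sumRB.
  exact: orthB.
- move=> [p [q [A [B [hA [sA [hB [sB hd]]]]]]]].
  have [a1 ha1] : exists a, expect (ket 1) (A a) != 0.
    by apply: sum_nz; rewrite -expect_sum sA expect1 ip_ket eqxx; exact: oner_neq0.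
  have [a0 ha0] : exists a, expect (ket 0) (A a) != 0.
    by apply: sum_nz; rewrite -expect_sum sA expect1 ip_ket eqxx; exact: oner_neq0.
  have [b1 hb1] : exists b, expect (ket 1) (B b) != 0.
    by apply: sum_nz; rewrite -expect_sum sB expect1 ip_ket eqxx; exact: oner_neq0.
  have [b0 hb0] : exists b, expect (ket 0) (B b) != 0.
    by apply: sum_nz; rewrite -expect_sum sB expect1 ip_ket eqxx; exact: oner_neq0.
  case E: (expect (ket 2) (A a1) == 0).
    move/eqP: E => E; have [hp hm] := psd_pm (hA a1) E.
    have := hd a1 b0 (@Ordinal 7 1 isT) (@Ordinal 7 2 isT).
    rewrite /psi /= !expect_kron hp hm.
    by move=> /(_ (mulf_neq0 ha1 hb0) (mulf_neq0 ha1 hb0)) /(congr1 val).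
  case E': (expect (ket 2) (B b1) == 0).
    move/eqP: E' => E'; have [hp hm] := psd_pm (hB b1) E'.
    have := hd a0 b1 (@Ordinal 7 3 isT) (@Ordinal 7 4 isT).
    rewrite /psi /= !expect_kron hp hm.
    by move=> /(_ (mulf_neq0 ha0 hb1) (mulf_neq0 ha0 hb1)) /(congr1 val).
  have := hd a1 b1 (@Ordinal 7 5 isT) (@Ordinal 7 6 isT).
  rewrite /psi /= !expect_kron.
  by move=> /(_ (mulf_neq0 ha1 hb1) (mulf_neq0 (negbT E) (negbT E'))) /(congr1 val).
Qed.
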